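(* Let $d$ be a positive square-free integer with $d\equiv 3\pmod 4$. Let $a,b,c$ be integers with $a>0$, $\gcd(a,b,c)=1$, $D=b^2d-ac\neq 0$, and $d_0=\gcd(a,bd,c)$. In the quaternion algebra $\left(\frac{-d,D}{\mathbb{Q}}\right)$ let \[ M = \mathbb{Z}\left\lbrack 1, \frac{\alpha_1( 1+i)}{2} , \frac{\beta (i+1)}{2} + \frac{ bi+j}{d_0 \alpha_1 },\frac{-bd - bi -j+ij}{2d_0} \right\rbrack, \] where $\alpha_1,\alpha_2,\beta$ are integers with $\alpha_1\alpha_2=a/d_0$ such that for all integers $m,l$ one has $\frac{bd}{a}m+\frac{c}{a}l\in\mathbb{Z}$ if and only if $m=\alpha_1 m_0+\beta l_0$ and $l=\alpha_2 l_0$ for some $m_0,l_0\in\mathbb{Z}$. Assume $\alpha_1$ is odd and $2\mid D$. Then \[ \left(\frac{M}{2}\right) = (-1)^{(d^2-1)/8}\quad\text{and}\quad \left\lbrack\mathbb{Z}_2^\times : \mathrm{nrd}\left(M_2^\times\right)\right\rbrack=1. \]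
   Context: $\left(\frac{-d,D}{\mathbb{Q}}\right)$ is the quaternion algebra with basis $1,i,j,ij$, $i^2=-d$, $j^2=D$, $ij=-ji$; $\mathbb{Z}[v_1,\dots,v_4]$ is the $\mathbb{Z}$-span of the $v_k$, a $\mathbb{Z}$-order. $M_2=M\otimes\mathbb{Z}_2$, $\mathrm{nrd}$ is the reduced norm. $\left(\frac{M}{2}\right)$ is the Eichler symbol of $M$ at $2$ (for $\varepsilon\in\{-1,0,1\}$, it equals $\varepsilon$ iff the Kronecker symbols $\left(\frac{\Delta(\alpha)}{2}\right)$, $\alpha\in M_2$, with $\Delta(\alpha)=\mathrm{tr}(\alpha)^2-4\mathrm{nrd}(\alpha)$, take values in $\{0,\varepsilon\}$). *)

(* Defs.v *)
From mathcomp Require Import all_boot all_order all_algebra.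
Set Implicit Arguments. Unset Strict Implicit. Unset Printing Implicit Defensive.
Import GRing.Theory Num.Theory.
Local Open Scope ring_scope.

Definition sqfree (n : nat) : Prop := forall p : nat, prime p -> ~~ (p * p %| n)%N.

(* x0 + x1 i + x2 j + x3 ij *)
Record quat := Quat { q0 : rat; q1 : rat; q2 : rat; q3 : rat }.

Definition qadd (x y : quat) : quat :=
  Quat (q0 x + q0 y) (q1 x + q1 y) (q2 x + q2 y) (q3 x + q3 y).
Definition qscale (r : rat) (x : quat) : quat :=
  Quat (r * q0 x) (r * q1 x) (r * q2 x) (r * q3 x).
Definition qone : quat := Quat 1 0 0 0.

(* multiplication in (-dd, DD / Q): i^2 = -dd, j^2 = DD, ij = -ji *)
Definition qmul (dd DD : rat) (x y : quat) : quat :=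
  Quat (q0 x * q0 y - dd * q1 x * q1 y + DD * q2 x * q2 y + dd * DD * q3 x * q3 y)
       (q0 x * q1 y + q1 x * q0 y - DD * q2 x * q3 y + DD * q3 x * q2 y)
       (q0 x * q2 y + q2 x * q0 y - dd * q1 x * q3 y + dd * q3 x * q1 y)
       (q0 x * q3 y + q3 x * q0 y + q1 x * q2 y - q2 x * q1 y).

Definition qnrd (dd DD : rat) (x : quat) : rat :=
  q0 x ^+ 2 + dd * q1 x ^+ 2 - DD * q2 x ^+ 2 - dd * DD * q3 x ^+ 2.
Definition qtr (x : quat) : rat := 2 * q0 x.
Definition qdisc (dd DD : rat) (x : quat) : rat := qtr x ^+ 2 - 4 * qnrd dd DD x.

Definition Mgens (d b d0 al1 be : int) : quat * quat * quat * quat :=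
  let r (z : int) : rat := z%:~R in
  (Quat 1 0 0 0,
   Quat (r al1 / 2) (r al1 / 2) 0 0,
   Quat (r be / 2) (r be / 2 + r b / (r d0 * r al1)) (1 / (r d0 * r al1)) 0,
   Quat (- (r b * r d) / (2 * r d0)) (- r b / (2 * r d0)) (- 1 / (2 * r d0))
        (1 / (2 * r d0))).

Definition Mcomb (g : quat * quat * quat * quat) (x1 x2 x3 x4 : int) : quat :=
  let: (v1, v2, v3, v4) := g in
  qadd (qadd (qscale x1%:~R v1) (qscale x2%:~R v2))
       (qadd (qscale x3%:~R v3) (qscale x4%:~R v4)).

(* 2-adic integers: sequences u with u (n+1) = u n mod 2^n; the represented
   2-adic integer is lim u n, and it is congruent to u n mod 2^n. *)
Definition coh (u : nat -> int) : Prop :=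
  forall n : nat, (u n.+1 = u n %[mod (2 ^+ n)])%Z.

(* v_2(q) >= N for a rational q *)
Definition v2ge (q : rat) (N : nat) : bool := odd (absz (denq (q / 2 ^+ N))).

Definition conv2 (r s : nat -> rat) : Prop :=
  forall N : nat, exists n0 : nat, forall n : nat, (n0 <= n)%N -> v2ge (r n - s n) N.

Definition qconv2 (x y : nat -> quat) : Prop :=
  [/\ conv2 (fun n => q0 (x n)) (fun n => q0 (y n)),
      conv2 (fun n => q1 (x n)) (fun n => q1 (y n)),
      conv2 (fun n => q2 (x n)) (fun n => q2 (y n)) &
      conv2 (fun n => q3 (x n)) (fun n => q3 (y n))].

(* elements of M_2 = M (x) Z_2: Z_2-coefficient vectors w.r.t. the generators *)
Record Z2coef := Z2c { y1 : nat -> int; y2 : nat -> int; y3 : nat -> int; y4 : nat -> int }.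
Definition inM2 (y : Z2coef) : Prop := [/\ coh (y1 y), coh (y2 y), coh (y3 y) & coh (y4 y)].

Definition approx (g : quat * quat * quat * quat) (y : Z2coef) (n : nat) : quat :=
  Mcomb g (y1 y n) (y2 y n) (y3 y n) (y4 y n).

Definition unitM2 (dd DD : rat) g (y : Z2coef) : Prop :=
  inM2 y /\ exists z : Z2coef, [/\ inM2 z,
    qconv2 (fun n => qmul dd DD (approx g y n) (approx g z n)) (fun _ => qone) &
    qconv2 (fun n => qmul dd DD (approx g z n) (approx g y n)) (fun _ => qone)].

Definition nrd_is (dd DD : rat) g (y : Z2coef) (u : nat -> int) : Prop :=
  conv2 (fun n => qnrd dd DD (approx g y n)) (fun n => (u n)%:~R).

(* Kronecker symbol (x / 2) of a 2-adic integer x, read off from x mod 8 *)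
Definition kron2q (q : rat) : int :=
  if v2ge (q - 1) 3 || v2ge (q + 1) 3 then 1
  else if v2ge (q - 3) 3 || v2ge (q + 3) 3 then -1 else 0.

Definition kron_disc (dd DD : rat) g (y : Z2coef) (e : int) : Prop :=
  exists n0 : nat, forall n : nat, (n0 <= n)%N -> kron2q (qdisc dd DD (approx g y n)) = e.

(* Eichler symbol (M/2) = e : the Kronecker symbols (Delta(alpha)/2), alpha in M_2,
   take values in {0, e}; for e <> 0 the value e is actually attained
   (otherwise the symbol is 0), so that the symbol is well defined. *)
Definition eichler_is (dd DD : rat) g (e : int) : Prop :=
  (forall y : Z2coef, inM2 y -> forall e' : int, kron_disc dd DD g y e' -> e' = 0 \/ e' = e)
  /\ (e != 0 -> exists y : Z2coef, inM2 y /\ kron_disc dd DD g y e).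

(* [Z_2^x : nrd(M_2^x)] = 1, i.e. every 2-adic unit is the norm of a unit of M_2 *)
Definition nrd_units_index1 (dd DD : rat) g : Prop :=
  forall u : nat -> int, coh u -> odd (absz (u 1%N)) ->
    exists y : Z2coef, unitM2 dd DD g y /\ nrd_is dd DD g y u.

(* Main.v *)
Require Import Defs.
From mathcomp Require Import all_boot all_order all_algebra.
From mathcomp Require Import zify ring lra.
Import GRing.Theory Num.Theory.
Local Open Scope ring_scope.

Lemma rat_frac_den (s : rat) (P Q : int) : Q != 0 -> s = P%:~R / Q%:~R ->
  numq s * Q = P * denq s /\ (denq s %| Q)%Z.
Proof.
move=> Q0 sE.
have E : numq s * Q = P * denq s.
  apply: (@intr_inj rat); rewrite !intrM numqE sE.
  have Q0' : (Q%:~R : rat) != 0 by rewrite intr_eq0.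
  field; exact: Q0'.
split=> //.
have : (denq s %| numq s * Q)%Z by rewrite E dvdz_mull.
rewrite Gauss_dvdzr //.
by by rewrite coprimez_sym coprimezE coprime_num_den.
Qed.

Lemma v2ge_frac (p q : int) N : odd `|q| ->
  v2ge (p%:~R / q%:~R) N = (2 ^+ N %| p)%Z.
Proof.
move=> oq.
have q0 : q != 0 by apply: contraTneq oq => ->.
have Q0 : q * 2 ^+ N != 0 by rewrite mulf_neq0 // expf_neq0.
have sE : p%:~R / q%:~R / 2 ^+ N = p%:~R / (q * 2 ^+ N)%:~R :> rat.
  by rewrite intrM invfM mulrA rmorphXn.
rewrite /v2ge sE.
have [E Dd] := rat_frac_den _ p _ Q0 (erefl _).
apply/idP/idP => [od | /dvdzP [p' ->]].
  have : (2 ^+ N %| p * denq (p%:~R / (q * 2 ^+ N)%:~R))%Z.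
    by rewrite -E; apply: dvdz_mull; apply: dvdz_mull; exact: dvdzz.
  rewrite Gauss_dvdzl //.
  apply: coprimezXl; rewrite coprimezE /=.
  by rewrite -[(1 + 1)%N]/2%N coprime2n.
have sE' : (p' * 2 ^+ N)%:~R / (q * 2 ^+ N)%:~R = p'%:~R / q%:~R :> rat.
  rewrite !intrM rmorphXn /=.
  have : (2 : rat) ^+ N != 0 by rewrite expf_neq0.
  have : (q%:~R : rat) != 0 by rewrite intr_eq0.
  move=> h1 h2; field; by rewrite h1 h2.
rewrite sE'.
have [_ D'] := rat_frac_den _ p' _ q0 (erefl _).
apply: dvdn_odd oq; exact: D'.
Qed.
Lemma disc_eq (d : nat) (D d0 al1 b be x1 x2 x3 x4 : int) :
  d0 != 0 -> al1 != 0 ->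
  let A' := d0*al1*(x2*al1 + x3*be) + 2*x3*b - x4*b*al1 in
  let I := - d%:Z * A'^+2 + D*((2*x3 - x4*al1)^+2 + d%:Z*(x4*al1)^+2) in
  qdisc d%:R D%:~R (Mcomb (Mgens d%:Z b d0 al1 be) x1 x2 x3 x4) =
   I%:~R / ((d0*al1)^+2)%:~R.
Proof.
move=> h0 h1 A' I.
rewrite /Mcomb /Mgens /qdisc /qtr /qnrd /qadd /qscale /= /I /A'.
rewrite -[(d%:Z)%:~R]/(d%:R : rat).
rewrite !(rmorphD, rmorphN, rmorphM, rmorphB, rmorphXn) /=.
rewrite -[(d%:Z)%:~R]/(d%:R : rat).
have h0' : (d0%:~R : rat) != 0 by rewrite intr_eq0.
have h1' : (al1%:~R : rat) != 0 by rewrite intr_eq0.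
field. by rewrite h0' h1'.
Qed.
Lemma oddzE (x : int) : odd `|x| = ~~ (2 %| x)%Z.
Proof. by rewrite /dvdz -topredE /= -[(1 + 1)%N]/2%N dvdn2 negbK. Qed.

Lemma sq_odd (x : int) : odd `|x| -> exists w : int, x ^+ 2 = 8 * w + 1.
Proof.
rewrite oddzE => ox.
have [r xr] : exists r : int, x = 2 * r + 1 by exists (x %/ 2)%Z; lia.
have [s [rs|rs]] : exists s : int, r = 2 * s \/ r = 2 * s + 1.
  by exists (r %/ 2)%Z; lia.
- by exists (2 * s ^+ 2 + s); rewrite xr rs; ring.
- by exists (2 * s ^+ 2 + 3 * s + 1); rewrite xr rs; ring.
Qed.

Lemma kron_frac (I m : int) : odd `|m| ->
  kron2q (I%:~R / m%:~R) =
  if (8 %| I - m)%Z || (8 %| I + m)%Z then 1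
  else if (8 %| I - 3 * m)%Z || (8 %| I + 3 * m)%Z then -1 else 0.
Proof.
move=> om.
have m0 : (m%:~R : rat) != 0 by rewrite intr_eq0; apply: contraTneq om => ->.
have E c : I%:~R / m%:~R - c%:~R = (I - c * m)%:~R / m%:~R :> rat.
  by rewrite rmorphB rmorphM /=; field.
have F c : I%:~R / m%:~R + c%:~R = (I + c * m)%:~R / m%:~R :> rat.
  by rewrite rmorphD rmorphM /=; field.
rewrite /kron2q.
rewrite -[1 : rat]/((1 : int)%:~R) -[3 : rat]/((3 : int)%:~R).
by rewrite E F E F !v2ge_frac // !mul1r.
Qed.

Lemma kron_arith (K : nat) (A W w : int) :
  let I := - (4 * K%:Z + 3) * A ^+ 2 + 8 * W in
  (if (8 %| I - (8 * w + 1))%Z || (8 %| I + (8 * w + 1))%Z then 1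
   else if (8 %| I - 3 * (8 * w + 1))%Z || (8 %| I + 3 * (8 * w + 1))%Z then -1 else 0)
  = (if odd `|A| then (if odd K then 1 else -1) else 0) :> int.
Proof.
move=> I.
have [k' [Kk|Kk]] : exists k' : int, K%:Z = 2 * k' \/ K%:Z = 2 * k' + 1.
  by exists (K%:Z %/ 2)%Z; lia.
- have oK : odd K = false.
    apply/negbTE; rewrite -[odd K]/(odd `|K%:Z|) oddzE negbK; lia.
  rewrite oK /I Kk.
  case oA: (odd `|A|).
    have [v ->] := sq_odd _ oA.
    have -> : - (4 * (2 * k') + 3) * (8 * v + 1) + 8 * W =
              8 * (W - 8 * k' * v - 3 * v - k') - 3 by ring.
    move: (W - 8 * k' * v - 3 * v - k') => Z.
    case: ifP => [| _]; first by lia.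
    case: ifP => //; lia.
  have [j ->] : exists j, A = 2 * j by exists (A %/ 2)%Z; move: oA; rewrite oddzE; lia.
  have -> : - (4 * (2 * k') + 3) * (2 * j) ^+ 2 + 8 * W =
              4 * (2 * W - (8 * k' + 3) * j ^+ 2) by ring.
  move: (2 * W - (8 * k' + 3) * j ^+ 2) => Z.
  case: ifP => [| _]; first by lia.
  case: ifP => //; lia.
- have oK : odd K = true.
    apply/idP; rewrite -[odd K]/(odd `|K%:Z|) oddzE; lia.
  rewrite oK /I Kk.
  case oA: (odd `|A|).
    have [v ->] := sq_odd _ oA.
    have -> : - (4 * (2 * k' + 1) + 3) * (8 * v + 1) + 8 * W =
              8 * (W - 8 * k' * v - 7 * v - k') - 7 by ring.
    move: (W - 8 * k' * v - 7 * v - k') => Z.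
    by rewrite ifT //; apply/orP; left; lia.
  have [j ->] : exists j, A = 2 * j by exists (A %/ 2)%Z; move: oA; rewrite oddzE; lia.
  have -> : - (4 * (2 * k' + 1) + 3) * (2 * j) ^+ 2 + 8 * W =
              4 * (2 * W - (8 * k' + 7) * j ^+ 2) by ring.
  move: (2 * W - (8 * k' + 7) * j ^+ 2) => Z.
  case: ifP => [| _]; first by lia.
  case: ifP => //; lia.
Qed.

Lemma kron_main (K : nat) (D d0 al1 b be x1 x2 x3 x4 : int) :
  (2 %| D)%Z -> odd `|d0| -> odd `|al1| ->
  kron2q (qdisc (4 * K + 3)%N%:R D%:~R
     (Mcomb (Mgens (4 * K + 3)%N%:Z b d0 al1 be) x1 x2 x3 x4)) =
  if odd `|(d0*al1*(x2*al1 + x3*be) + 2*x3*b - x4*b*al1)%R| then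
    (if odd K then 1 else -1) else 0.
Proof.
move=> /dvdzP [D' ->] od0 oal1.
have nz x : odd `|x| -> x != 0 by move=> ox; apply: contraTneq ox => ->.
rewrite disc_eq ?nz //.
have om : odd `|(d0 * al1) ^+ 2| by rewrite abszX oddX abszM oddM od0 oal1.
rewrite kron_frac //.
have o2 : odd `|(d0 * al1)%R| by rewrite abszM oddM od0 oal1.
have [w Hm] := sq_odd (d0 * al1) o2.
rewrite Hm.
set A' := d0*al1*(x2*al1 + x3*be) + 2*x3*b - x4*b*al1.
set t := x4 * al1.
have dZ : ((4 * K + 3)%N : int) = 4 * K%:Z + 3 by rewrite PoszD PoszM.
rewrite dZ.
have HI : - (4 * K%:Z + 3) * A' ^+ 2 +
   D' * 2 * ((2 * x3 - t) ^+ 2 + (4 * K%:Z + 3) * t ^+ 2) =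
   - (4 * K%:Z + 3) * A' ^+ 2 + 8 * (D' * (x3 ^+ 2 - x3 * t + (K%:Z + 1) * t ^+ 2)) by ring.
rewrite HI.
exact: kron_arith.
Qed.

Lemma cohE (u : nat -> int) : coh u <-> forall n, (2 ^+ n %| u n.+1 - u n)%Z.
Proof.
split=> h n; move: (h n).
  by move/eqP; rewrite eqz_mod_dvd.
by rewrite -eqz_mod_dvd => /eqP.
Qed.

Lemma dvd_le (n m : nat) (x : int) : (m <= n)%N -> (2 ^+ n %| x)%Z -> (2 ^+ m %| x)%Z.
Proof. by move=> le; apply: dvdz_trans; apply: dvdz_exp2l. Qed.

Lemma coh_const (c : int) : coh (fun _ => c).
Proof. by move=> n. Qed.

Lemma coh_add (x y : nat -> int) : coh x -> coh y -> coh (fun n => x n + y n).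
Proof.
move=> /cohE hx /cohE hy; apply/cohE => n.
have -> : x n.+1 + y n.+1 - (x n + y n) = (x n.+1 - x n) + (y n.+1 - y n) by ring.
by rewrite rpredD.
Qed.

Lemma coh_opp (x : nat -> int) : coh x -> coh (fun n => - x n).
Proof.
move=> /cohE hx; apply/cohE => n.
have -> : - x n.+1 - - x n = - (x n.+1 - x n) by ring.
by rewrite rpredN.
Qed.

Lemma coh_mul (x y : nat -> int) : coh x -> coh y -> coh (fun n => x n * y n).
Proof.
move=> /cohE hx /cohE hy; apply/cohE => n.
have -> : x n.+1 * y n.+1 - x n * y n =
   x n.+1 * (y n.+1 - y n) + y n * (x n.+1 - x n) by ring.
by rewrite rpredD // dvdz_mull.
Qed.

Lemma odd_mul_gauss (n : nat) (x o : int) : odd `|o| ->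
  (2 ^+ n %| x * o)%Z -> (2 ^+ n %| x)%Z.
Proof.
move=> oo; rewrite Gauss_dvdzl //.
apply: coprimezXl; rewrite coprimezE /=.
by rewrite -[(1 + 1)%N]/2%N coprime2n.
Qed.

Lemma hensel_ex (A B C : int) : odd `|B| -> (2 %| C)%Z ->
  forall n, exists t, (2 %| t)%Z && (2 ^+ n %| A * t ^+ 2 + B * t + C)%Z.
Proof.
move=> oB eC [|n]; first by exists 0; rewrite dvd1z dvdz0.
elim: n => [|n [t /andP [et ft]]].
  exists 0; rewrite dvdz0 /= expr1 expr0n /= !(mulr0, mul0r, add0r); exact: eC.
have /dvdzP [h Eh] := ft.
have [h' [hE|hE]] : exists h' : int, h = 2 * h' \/ h = 2 * h' + 1.
  by exists (h %/ 2)%Z; lia.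
  exists t; rewrite et /= Eh hE !exprS; apply/dvdzP; exists h'; ring.


exists (t + 2 ^+ n.+1).
have /dvdzP [s ts] := et.
rewrite oddzE in oB.
have [B' BE] : exists B' : int, B = 2 * B' + 1 by exists (B %/ 2)%Z; lia.
apply/andP; split.
  by rewrite rpredD // exprS dvdz_mulr.
have -> : A * (t + 2 ^+ n.+1) ^+ 2 + B * (t + 2 ^+ n.+1) + C =
   (A * t ^+ 2 + B * t + C) + 2 ^+ n.+1 * (2 * A * t + B + A * 2 ^+ n.+1) by ring.
rewrite Eh hE ts BE !exprS.
set P := 2 ^+ n.
have -> : (2 * h' + 1) * (2 * P) + 2 * P * (2 * A * (s * 2) + (2 * B' + 1) + A * (2 * P))
  = (h' + 1 + 2 * A * s + B' + A * P) * (2 * (2 * P)) by ring.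
by rewrite dvdz_mull.
Qed.

Lemma hensel_uniq (A B C : int) n s t : odd `|B| -> (2 %| s)%Z -> (2 %| t)%Z ->
  (2 ^+ n %| A * s ^+ 2 + B * s + C)%Z -> (2 ^+ n %| A * t ^+ 2 + B * t + C)%Z ->
  (2 ^+ n %| s - t)%Z.
Proof.
move=> oB es et fs ft.
apply: (@odd_mul_gauss _ _ (A * (s + t) + B)).
  move: oB; rewrite !oddzE.
  have /dvdzP [s' ->] := es; have /dvdzP [t' ->] := et.
  have -> : A * (s' * 2 + t' * 2) + B = B + 2 * (A * (s' + t')) by ring.
  move: (A * (s' + t')) => Z; lia.
have -> : (s - t) * (A * (s + t) + B) =
   (A * s ^+ 2 + B * s + C) - (A * t ^+ 2 + B * t + C) by ring.
by rewrite rpredB.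
Qed.

Lemma root_seq (A B : int) (C : nat -> int) : odd `|B| ->
  (forall n, (2 %| C n)%Z) -> (forall n, (2 ^+ n %| C n.+1 - C n)%Z) ->
  exists T : nat -> int,
    (forall n, (2 ^+ n %| A * T n ^+ 2 + B * T n + C n)%Z) /\ coh T.
Proof.
move=> oB eC cC.
pose P n := [pred t : int | (2 %| t)%Z && (2 ^+ n %| A * t ^+ 2 + B * t + C n)%Z].
have ex n : exists t, P n t by exact: hensel_ex.
exists (fun n => xchoose (ex n)); split.
  by move=> n; have /andP [] := xchooseP (ex n).
apply/cohE => n.
have /andP [e1 f1] := xchooseP (ex n.+1).
have /andP [e0 f0] := xchooseP (ex n).
apply: (@hensel_uniq A B (C n)) => //.
have -> : A * xchoose (ex n.+1) ^+ 2 + B * xchoose (ex n.+1) + C n =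
  (A * xchoose (ex n.+1) ^+ 2 + B * xchoose (ex n.+1) + C n.+1) - (C n.+1 - C n) by ring.
rewrite rpredB //; apply: (@dvd_le n.+1) => //.
Qed.

Lemma inv_seq (w : nat -> int) : (forall n, odd `|w n|) ->
  (forall n, (2 ^+ n %| w n.+1 - w n)%Z) ->
  exists V : nat -> int, (forall n, (2 ^+ n %| w n * V n - 1)%Z) /\ coh V.
Proof.
move=> ow cw.
pose P n := [pred v : int | (2 ^+ n %| w n * v - 1)%Z].
have ex n : exists v, P n v.
  have [x [y Ex]] := Bezoutz (w n) (2 ^+ n).
  have g1 : gcdz (w n) (2 ^+ n) = 1.
    apply/eqP; rewrite -/(coprimez _ _) coprimez_sym.
    apply: coprimezXl; rewrite coprimezE /=.
    by rewrite -[(1 + 1)%N]/2%N coprime2n.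
  exists x; rewrite /P inE.
  have -> : w n * x - 1 = (x * w n + y * 2 ^+ n - 1) - y * 2 ^+ n by ring.
  by rewrite Ex g1 subrr sub0r rpredN dvdz_mull.
exists (fun n => xchoose (ex n)); split.
  by move=> n; have := xchooseP (ex n).
apply/cohE => n.
have f1 := xchooseP (ex n.+1).
have f0 := xchooseP (ex n).
rewrite /P inE in f0 f1.
apply: (@odd_mul_gauss _ _ (w n)) => //.
have -> : (xchoose (ex n.+1) - xchoose (ex n)) * w n =
  (w n.+1 * xchoose (ex n.+1) - 1) - (w n * xchoose (ex n) - 1)
   - (w n.+1 - w n) * xchoose (ex n.+1) by ring.
have f1' : (2 ^+ n.+1 %| w n.+1 * xchoose (ex n.+1) - 1)%Z by exact: f1.
apply: rpredB; first apply: rpredB => //.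
- exact: (@dvd_le n.+1).
- by apply: dvdz_mulr.
Qed.

Lemma v2ge_int (z : int) N : (2 ^+ N %| z)%Z -> v2ge z%:~R N.
Proof.
move=> h; have := v2ge_frac z 1 N isT; rewrite h divr1 => ->; done.
Qed.

Lemma conv2_int (r s : nat -> rat) (f : nat -> int) :
  (forall n, r n - s n = (f n)%:~R) -> (forall n, (2 ^+ n %| f n)%Z) -> conv2 r s.
Proof.
move=> E h N; exists N => n le; rewrite E; apply: v2ge_int.
exact: (@dvd_le n N _ le).
Qed.

Arguments qmul : simpl never.
Arguments Mcomb : simpl never.
Arguments qnrd : simpl never.
Section Q.
Variables (K : nat) (D b d0 al1 be : int).
Hypotheses (h0 : d0 != 0) (h1 : al1 != 0).
Let g := Mgens (4 * K + 3)%N%:Z b d0 al1 be.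
Let dd : rat := (4 * K + 3)%N%:R.
Let DD : rat := D%:~R.

Lemma dd_eq : dd = 4 * K%:R + 3.
Proof. by rewrite /dd natrD natrM. Qed.

Lemma dZ_eq : ((4 * K + 3)%N%:Z)%:~R = 4 * K%:R + 3 :> rat.
Proof. by rewrite -dd_eq. Qed.

Definition Nf (x1 x2 : int) : int :=
  x1 ^+ 2 + al1 * x1 * x2 + (K%:Z + 1) * al1 ^+ 2 * x2 ^+ 2.

Lemma nrd_eq x1 x2 : qnrd dd DD (Mcomb g x1 x2 0 0) = (Nf x1 x2)%:~R.
Proof.
rewrite /Mcomb /g /Mgens /qnrd /qadd /qscale /= dd_eq /Nf.
rewrite !(rmorphD, rmorphN, rmorphM, rmorphB, rmorphXn) /=.
have h0' : (d0%:~R : rat) != 0 by rewrite intr_eq0.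
have h1' : (al1%:~R : rat) != 0 by rewrite intr_eq0.
rewrite -[(K%:Z)%:~R]/(K%:R : rat).
field. by rewrite h0' h1'.
Qed.

Lemma mul_eq1 x1 x2 v :
  qmul dd DD (Mcomb g x1 x2 0 0) (Mcomb g (v * (x1 + al1 * x2)) (- (v * x2)) 0 0)
  = Quat (Nf x1 x2 * v)%:~R 0 0 0.
Proof.
rewrite /Mcomb /g /Mgens /qmul /qadd /qscale /= dd_eq /Nf.
rewrite !(rmorphD, rmorphN, rmorphM, rmorphB, rmorphXn) /=.
have h0' : (d0%:~R : rat) != 0 by rewrite intr_eq0.
have h1' : (al1%:~R : rat) != 0 by rewrite intr_eq0.
rewrite -[(K%:Z)%:~R]/(K%:R : rat).
congr Quat; field; by rewrite h0' h1'.
Qed.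

Lemma mul_eq2 x1 x2 v :
  qmul dd DD (Mcomb g (v * (x1 + al1 * x2)) (- (v * x2)) 0 0) (Mcomb g x1 x2 0 0)
  = Quat (Nf x1 x2 * v)%:~R 0 0 0.
Proof.
rewrite /Mcomb /g /Mgens /qmul /qadd /qscale /= dd_eq /Nf.
rewrite !(rmorphD, rmorphN, rmorphM, rmorphB, rmorphXn) /=.
have h0' : (d0%:~R : rat) != 0 by rewrite intr_eq0.
have h1' : (al1%:~R : rat) != 0 by rewrite intr_eq0.
rewrite -[(K%:Z)%:~R]/(K%:R : rat).
congr Quat; field; by rewrite h0' h1'.
Qed.

Lemma unit_from (u X1 X2 V : nat -> int) :
  coh X1 -> coh X2 -> coh V ->
  (forall n, (2 ^+ n %| Nf (X1 n) (X2 n) - u n)%Z) ->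
  (forall n, (2 ^+ n %| Nf (X1 n) (X2 n) * V n - 1)%Z) ->
  exists y, unitM2 dd DD g y /\ nrd_is dd DD g y u.
Proof.
move=> c1 c2 cV hN hV.
exists (Z2c X1 X2 (fun _ => 0) (fun _ => 0)); split; last first.
  apply: (@conv2_int _ _ (fun n => Nf (X1 n) (X2 n) - u n)) => // n.
  by rewrite /approx /= nrd_eq rmorphB.
split; first by split => //; apply: coh_const.
exists (Z2c (fun n => V n * (X1 n + al1 * X2 n)) (fun n => - (V n * X2 n))
          (fun _ => 0) (fun _ => 0)).
have q0E n : (Nf (X1 n) (X2 n) * V n)%:~R - 1 = (Nf (X1 n) (X2 n) * V n - 1)%:~R :> rat.
  by rewrite rmorphB.
have z0 : forall n, (0 : rat) - 0 = (0 : int)%:~R by move=> n; rewrite subr0.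
have c0 : forall n, (2 ^+ n %| (0 : int))%Z by move=> n; rewrite dvdz0.
split.
- split => //; try apply: coh_const.
  + apply: coh_mul => //; apply: coh_add => //; apply: coh_mul => //; exact: coh_const.
  + by apply: coh_opp; apply: coh_mul.
- split.
  + apply: (@conv2_int _ _ (fun n => Nf (X1 n) (X2 n) * V n - 1)) => // n.
    by rewrite /approx mul_eq1 /= q0E.
  + by apply: (@conv2_int _ _ (fun n => 0)) => // n; rewrite /approx mul_eq1.
  + by apply: (@conv2_int _ _ (fun n => 0)) => // n; rewrite /approx mul_eq1.
  + by apply: (@conv2_int _ _ (fun n => 0)) => // n; rewrite /approx mul_eq1.
- split.
  + apply: (@conv2_int _ _ (fun n => Nf (X1 n) (X2 n) * V n - 1)) => // n.
    by rewrite /approx mul_eq2 /= q0E.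
  + by apply: (@conv2_int _ _ (fun n => 0)) => // n; rewrite /approx mul_eq2.
  + by apply: (@conv2_int _ _ (fun n => 0)) => // n; rewrite /approx mul_eq2.
  + by apply: (@conv2_int _ _ (fun n => 0)) => // n; rewrite /approx mul_eq2.
Qed.

End Q.

Lemma sign_eq (K : nat) :
  (-1) ^+ (((4 * K + 3) * (4 * K + 3) - 1) %/ 8) = (if odd K then 1 else -1 : int).
Proof.
have -> : ((4 * K + 3) * (4 * K + 3) - 1 = 8 * (2 * K * K + 3 * K + 1))%N.
  have -> : ((4 * K + 3) * (4 * K + 3) = 8 * (2 * K * K + 3 * K + 1) + 1)%N.
    by rewrite !mulnDl !mulnDr; nia.
  by rewrite addnK.
rewrite mulKn // -signr_odd !oddD !oddM /=.
by case: (odd K).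
Qed.

Lemma d0_odd (a b c : int) (d : nat) : odd d -> gcdz (gcdz a b) c = 1 ->
  odd `|gcdz (gcdz a (b * d%:Z)) c|.
Proof.
move=> od g1; rewrite oddzE; apply/negP => h2.
have ha : (2 %| a)%Z := dvdz_trans h2 (dvdz_trans (dvdz_gcdl _ _) (dvdz_gcdl _ _)).
have hbd : (2 %| b * d%:Z)%Z := dvdz_trans h2 (dvdz_trans (dvdz_gcdl _ _) (dvdz_gcdr _ _)).
have hc : (2 %| c)%Z := dvdz_trans h2 (dvdz_gcdr _ _).
have hb : (2 %| b)%Z.
  move: hbd; rewrite Gauss_dvdzl // coprimezE /=.
  by rewrite -[(1 + 1)%N]/2%N coprime2n.
have : (2 %| gcdz (gcdz a b) c)%Z by rewrite !dvdz_gcd ha hb hc.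
by rewrite g1.
Qed.

Theorem lemma3p6 (d : nat) (a b c al1 al2 be : int) :
  (0 < d)%N -> sqfree d -> (d %% 4 = 3)%N ->
  0 < a -> gcdz (gcdz a b) c = 1 ->
  let D : int := b ^+ 2 * d%:Z - a * c in
  D != 0 ->
  let d0 : int := gcdz (gcdz a (b * d%:Z)) c in
  al1 * al2 = (a %/ d0)%Z ->
  (forall m l : int,
     ((b * d%:Z)%:~R / a%:~R * m%:~R + c%:~R / a%:~R * l%:~R : rat) \is a Num.int
     <-> exists m0 l0 : int, m = al1 * m0 + be * l0 /\ l = al2 * l0) ->
  odd (absz al1) -> (2 %| D)%Z ->
  let g := Mgens d%:Z b d0 al1 be in
  eichler_is d%:R D%:~R g ((-1) ^+ ((d * d - 1) %/ 8)) /\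
  nrd_units_index1 d%:R D%:~R g.
Proof.
move=> d_gt0 _ d4 a_gt0 g1 D _ d0 _ _ oal1 D2 g.
have [K dE] : exists K, d = (4 * K + 3)%N by exists (d %/ 4)%N; lia.
have od0 : odd `|d0| by apply: d0_odd => //; rewrite dE oddD oddM.
have nz x : odd `|x| -> x != 0 by move=> ox; apply: contraTneq ox => ->.
move: D2 od0; rewrite /g /d0 /D {g d0 D}; subst d.
set D := b ^+ 2 * _ - _; set d0 := gcdz _ _ => D2 od0.
rewrite sign_eq.
split.
  split.
    move=> y _ e' [n0 Hn].
    move: (Hn n0 (leqnn _)); rewrite /approx kron_main //.
    by case: ifP => _ <-; [right | left].
  move=> _; exists (Z2c (fun _ => 0) (fun _ => 1) (fun _ => 0) (fun _ => 0)).
  split; first by split; apply: coh_const.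
  exists 0%N => n _; rewrite /approx kron_main //=.
  rewrite !(mul1r, mul0r, mulr0, addr0, subr0, mulr1).
  by rewrite abszM oddM abszM oddM od0 oal1.
move=> u cu ou.
pose w n := u n.+1.
have cu' := cu; move/cohE: cu' => cu'.
have ow : forall n, odd `|w n|.
  elim=> [//|n IH]; rewrite /w.
  have h := @dvd_le n.+1 1 _ isT (cu' n.+1).
  move: IH h; rewrite /w !oddzE expr1; lia.
have cw : forall n, (2 ^+ n %| w n.+1 - w n)%Z.
  by move=> n; apply: (@dvd_le n.+1) => //; exact: cu'.
have wu : forall n, (2 ^+ n %| w n - u n)%Z by move=> n; exact: cu'.
have [V [hV cV]] := inv_seq w ow cw.
have hNV (N : nat -> int) : (forall n, (2 ^+ n %| N n - w n)%Z) ->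
    (forall n, (2 ^+ n %| N n * V n - 1)%Z).
  move=> hN n.
  have -> : N n * V n - 1 = (N n - w n) * V n + (w n * V n - 1) by ring.
  by rewrite rpredD // dvdz_mulr.
have hNu (N : nat -> int) : (forall n, (2 ^+ n %| N n - w n)%Z) ->
    (forall n, (2 ^+ n %| N n - u n)%Z).
  move=> hN n.
  have -> : N n - u n = (N n - w n) + (w n - u n) by ring.
  by rewrite rpredD.
have al0 : al1 != 0 by apply: nz.
have d00 : d0 != 0 by apply: nz.
case oK: (odd K).
- pose C n := 1 - w n.
  have eC n : (2 %| C n)%Z by move: (ow n); rewrite /C oddzE; lia.
  have cC n : (2 ^+ n %| C n.+1 - C n)%Z.
    have -> : C n.+1 - C n = - (w n.+1 - w n) by rewrite /C; ring.
    by rewrite rpredN.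
  have [T [hT cT]] := root_seq ((K%:Z + 1) * al1 ^+ 2) al1 C oal1 eC cC.
  have hN n : (2 ^+ n %| Nf K al1 1 (T n) - w n)%Z.
    have -> : Nf K al1 1 (T n) - w n =
      (K%:Z + 1) * al1 ^+ 2 * T n ^+ 2 + al1 * T n + C n by rewrite /Nf /C; ring.
    exact: hT.
  exact: (@unit_from K D b d0 al1 be d00 al0 u (fun _ => 1) T V
            (coh_const 1) cT cV (hNu _ hN) (hNV _ hN)).
- pose C n := (K%:Z + 1) * al1 ^+ 2 - w n.
  have oA : odd `|(K%:Z + 1) * al1 ^+ 2|.
    rewrite abszM abszX oddM oddX oal1 andbT.
    have -> : (K%:Z + 1 = (K.+1)%:Z) by rewrite -addn1 PoszD.
    by rewrite absz_nat /= oK.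
  have eC n : (2 %| C n)%Z.
    move: (ow n) oA; rewrite /C !oddzE; move: ((K%:Z + 1) * al1 ^+ 2) => Z; lia.
  have cC n : (2 ^+ n %| C n.+1 - C n)%Z.
    have -> : C n.+1 - C n = - (w n.+1 - w n) by rewrite /C; ring.
    by rewrite rpredN.
  have [T [hT cT]] := root_seq 1 al1 C oal1 eC cC.
  have hN n : (2 ^+ n %| Nf K al1 (T n) 1 - w n)%Z.
    have -> : Nf K al1 (T n) 1 - w n =
      1 * T n ^+ 2 + al1 * T n + C n by rewrite /Nf /C; ring.
    exact: hT.
  exact: (@unit_from K D b d0 al1 be d00 al0 u T (fun _ => 1) V
            cT (coh_const 1) cV (hNu _ hN) (hNV _ hN)).
Qed.
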